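(* Let $G,G'$ be well-formed canonical global types (possibly containing in-transit constructs). Then for every label $l$ and every role $s$: $G\xrightarrow{l}G'$ if and only if $\mathrm{enc}_s(G)\xrightarrow{\mathrm{enc}_s(l)}\mathrm{enc}_s(G')$.
   Context: Global types: $G::=\mathsf{end}\mid t\mid\mu t.G\mid p\to q:\{l_i:G_i\}_{i\in I}\mid p\to q\ \mathrm{via}\ s:\{l_i:G_i\}_{i\in I}$ plus runtime constructs $p\rightsquigarrow q:j\{l_i:G_i\}$ ($l_j$ sent by $p$, not yet received by $q$) and $p\rightsquigarrow q\ \mathrm{via}\ s:j\{l_i:G_i\}$ ($l_j$ sent by $p$ to router $s$, not yet routed to $q$); $I\neq\emptyset$, distinct labels, $p\neq q$ (and $p,q,s$ pairwise distinct when routed), recursion contractive and equi-recursive. Canonical = no routed constructs. Well-formed = projection onto every participant is defined (standard MPST projection with merging). Labels: $pq!j$, $pq?j$, $s{:}(pq!j)$, $s{:}(pq?j)$; subject of $pq!j$, $s{:}(pq!j)$ is $p$; of $pq?j$, $s{:}(pq?j)$ is $q$. Global LTS: (Gr1) $p\to q:\{l_i:G_i\}\xrightarrow{pq!j}p\rightsquigarrow q:j\{l_i:G_i\}$; (Gr2) $p\rightsquigarrow q:j\{l_i:G_i\}\xrightarrow{pq?j}G_j$; (Gr3) $\mu t.G\xrightarrow{l}G'$ if $G[\mu t.G/t]\xrightarrow{l}G'$; (Gr4) if $G_i\xrightarrow{l}G'_i$ for all $i$ and $\mathrm{subj}(l)\notin\{p,q\}$ then $p\to q:\{l_i:G_i\}\xrightarrow{l}p\to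 q:\{l_i:G'_i\}$; (Gr5) if $G_j\xrightarrow{l}G'_j$, $\mathrm{subj}(l)\neq q$, $G'_i=G_i$ ($i\neq j$), then $p\rightsquigarrow q:j\{l_i:G_i\}\xrightarrow{l}p\rightsquigarrow q:j\{l_i:G'_i\}$; (Gr6) $p\to q\ \mathrm{via}\ s:\{l_i:G_i\}\xrightarrow{s:(pq!j)}p\rightsquigarrow q\ \mathrm{via}\ s:j\{l_i:G_i\}$; (Gr7) $p\rightsquigarrow q\ \mathrm{via}\ s:j\{l_i:G_i\}\xrightarrow{s:(pq?j)}G_j$; (Gr8),(Gr9) as (Gr4),(Gr5) for the routed constructs. Encoding $\mathrm{enc}_s$: identity on $\mathsf{end}$, $t$; $\mathrm{enc}_s(\mu t.G)=\mu t.\mathrm{enc}_s(G)$; $\mathrm{enc}_s(p\to q:\{l_i:G_i\})$ is $p\to q:\{l_i:\mathrm{enc}_s(G_i)\}$ if $s\in\{p,q\}$ and $p\to q\ \mathrm{via}\ s:\{l_i:\mathrm{enc}_s(G_i)\}$ otherwise; likewise $\mathrm{enc}_s(p\rightsquigarrow q:j\{l_i:G_i\})$ is $p\rightsquigarrow q:j\{l_i:\mathrm{enc}_s(G_i)\}$ if $s\in\{p,q\}$ and $p\rightsquigarrow q\ \mathrm{via}\ s:j\{l_i:\mathrm{enc}_s(G_i)\}$ otherwise. On labels: $\mathrm{enc}_s(pq!j)=s{:}(pq!j)$ and $\mathrm{enc}_s(pq?j)=s{:}(pq?j)$ if $s\notin\{p,q\}$, and $\mathrm{enc}_s(l)=l$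 otherwise. *)

(* Defs.v *)
From mathcomp Require Import all_boot.
Set Implicit Arguments.
Unset Strict Implicit.
Unset Printing Implicit Defensive.

(* A branch {l_i : G_i}_{i in I} is a list of (label index, continuation);
   the label l_i is identified with its index i, so the action pq!j
   means "label l_j". *)
Definition role := nat.
Definition tvar := nat.
Definition lab := nat.

Inductive gtype : Type :=
| GEnd : gtype
| GVar : tvar -> gtype
| GRec : tvar -> gtype -> gtype
| GMsg : role -> role -> seq (lab * gtype) -> gtype
| GRMsg : role -> role -> role -> seq (lab * gtype) -> gtype        (* p -> q via s : {..} *)
| GTr : role -> role -> lab -> seq (lab * gtype) -> gtype           (* p ~> q : j {..} *)
| GRTr : role -> role -> role -> lab -> seq (lab * gtype) -> gtype. (* p ~> q via s : j {..} *)

Definition keys {A : Type} (bs : seq (lab * A)) : seq lab := map fst bs.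

Fixpoint lookup {A : Type} (k : lab) (bs : seq (lab * A)) : option A :=
  match bs with
  | [::] => None
  | (k', x) :: bs' => if k == k' then Some x else lookup k bs'
  end.

Definition gnth (bs : seq (lab * gtype)) (i : nat) : lab * gtype := nth (0, GEnd) bs i.

(* capture-naive substitution G[U/t] *)
Fixpoint subst (t : tvar) (U : gtype) (G : gtype) : gtype :=
  match G with
  | GEnd => GEnd
  | GVar t' => if t' == t then U else GVar t'
  | GRec t' G1 => if t' == t then GRec t' G1 else GRec t' (subst t U G1)
  | GMsg p q bs => GMsg p q (map (fun b => (b.1, subst t U b.2)) bs)
  | GRMsg p q s bs => GRMsg p q s (map (fun b => (b.1, subst t U b.2)) bs)
  | GTr p q j bs => GTr p q j (map (fun b => (b.1, subst t U b.2)) bs)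
  | GRTr p q s j bs => GRTr p q s j (map (fun b => (b.1, subst t U b.2)) bs)
  end.

Fixpoint fv (G : gtype) : seq tvar :=
  match G with
  | GEnd => [::]
  | GVar t => [:: t]
  | GRec t G1 => filter (fun x => x != t) (fv G1)
  | GMsg _ _ bs | GRMsg _ _ _ bs | GTr _ _ _ bs | GRTr _ _ _ _ bs =>
      flatten (map (fun b => fv b.2) bs)
  end.

Fixpoint roles (G : gtype) : seq role :=
  match G with
  | GEnd | GVar _ => [::]
  | GRec _ G1 => roles G1
  | GMsg p q bs | GTr p q _ bs => p :: q :: flatten (map (fun b => roles b.2) bs)
  | GRMsg p q s bs | GRTr p q s _ bs =>
      p :: q :: s :: flatten (map (fun b => roles b.2) bs)
  end.

Fixpoint canonical (G : gtype) : bool :=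
  match G with
  | GEnd | GVar _ => true
  | GRec _ G1 => canonical G1
  | GMsg _ _ bs | GTr _ _ _ bs => all (fun b => canonical b.2) bs
  | GRMsg _ _ _ _ | GRTr _ _ _ _ _ => false
  end.

Fixpoint unguarded_var (G : gtype) : bool :=
  match G with
  | GVar _ => true
  | GRec _ G1 => unguarded_var G1
  | _ => false
  end.

Fixpoint global_type (G : gtype) : bool :=
  match G with
  | GEnd | GVar _ => true
  | GRec _ G1 => ~~ unguarded_var G1 && global_type G1
  | GMsg p q bs =>
      [&& p != q, 0 < size bs, uniq (keys bs) & all (fun b => global_type b.2) bs]
  | GRMsg p q s bs =>
      [&& uniq [:: p; q; s], 0 < size bs, uniq (keys bs) & all (fun b => global_type b.2) bs]
  | GTr p q j bs =>
      [&& p != q, j \in keys bs, uniq (keys bs) & all (fun b => global_type b.2) bs]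
  | GRTr p q s j bs =>
      [&& uniq [:: p; q; s], j \in keys bs, uniq (keys bs) & all (fun b => global_type b.2) bs]
  end.

Inductive ltype : Type :=
| LEnd : ltype
| LVar : tvar -> ltype
| LRec : tvar -> ltype -> ltype
| LSend : role -> seq (lab * ltype) -> ltype
| LRecv : role -> seq (lab * ltype) -> ltype.

(* full merging *)
Inductive lmerge : ltype -> ltype -> ltype -> Prop :=
| lm_end : lmerge LEnd LEnd LEnd
| lm_var t : lmerge (LVar t) (LVar t) (LVar t)
| lm_rec t T1 T2 T3 : lmerge T1 T2 T3 -> lmerge (LRec t T1) (LRec t T2) (LRec t T3)
| lm_send q bs1 bs2 bs3 :
    uniq (keys bs3) ->
    (forall k, (k \in keys bs1) = (k \in keys bs3)) ->
    (forall k, (k \in keys bs2) = (k \in keys bs3)) ->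
    (forall k T1 T2 T3, lookup k bs1 = Some T1 -> lookup k bs2 = Some T2 ->
        lookup k bs3 = Some T3 -> lmerge T1 T2 T3) ->
    lmerge (LSend q bs1) (LSend q bs2) (LSend q bs3)
| lm_recv p bs1 bs2 bs3 :
    uniq (keys bs3) ->
    (forall k, (k \in keys bs3) = (k \in keys bs1) || (k \in keys bs2)) ->
    (forall k T1 T2 T3, lookup k bs1 = Some T1 -> lookup k bs2 = Some T2 ->
        lookup k bs3 = Some T3 -> lmerge T1 T2 T3) ->
    (forall k T1, lookup k bs1 = Some T1 -> lookup k bs2 = None -> lookup k bs3 = Some T1) ->
    (forall k T2, lookup k bs1 = None -> lookup k bs2 = Some T2 -> lookup k bs3 = Some T2) ->
    lmerge (LRecv p bs1) (LRecv p bs2) (LRecv p bs3).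

Inductive merge_all : seq ltype -> ltype -> Prop :=
| ma_one T : merge_all [:: T] T
| ma_cons T Ts U V : merge_all Ts U -> lmerge T U V -> merge_all (T :: Ts) V.

(* Projection G |` r = T (a partial function, as a relation).  Routed
   constructs have no projection rule: well-formedness is only used for
   canonical global types. *)
Inductive proj : gtype -> role -> ltype -> Prop :=
| pj_end r : proj GEnd r LEnd
| pj_var r t : proj (GVar t) r (LVar t)
| pj_rec_in r t G T :
    (r \in roles G) || (fv (GRec t G) != [::]) ->
    proj G r T -> proj (GRec t G) r (LRec t T)
| pj_rec_out r t G :
    ~~ ((r \in roles G) || (fv (GRec t G) != [::])) -> proj (GRec t G) r LEnd
| pj_msg_p r p q bs Ts :
    r = p ->
    size Ts = size bs -> (forall i, i < size bs -> proj (gnth bs i).2 r (nth LEnd Ts i)) ->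
    proj (GMsg p q bs) r (LSend q (zip (keys bs) Ts))
| pj_msg_q r p q bs Ts :
    r = q ->
    size Ts = size bs -> (forall i, i < size bs -> proj (gnth bs i).2 r (nth LEnd Ts i)) ->
    proj (GMsg p q bs) r (LRecv p (zip (keys bs) Ts))
| pj_msg_other r p q bs Ts T :
    r <> p -> r <> q ->
    size Ts = size bs -> (forall i, i < size bs -> proj (gnth bs i).2 r (nth LEnd Ts i)) ->
    merge_all Ts T ->
    proj (GMsg p q bs) r T
| pj_tr_p r p q j bs Gj T :
    r = p -> lookup j bs = Some Gj -> proj Gj r T ->
    proj (GTr p q j bs) r T
| pj_tr_q r p q j bs Ts :
    r = q ->
    size Ts = size bs -> (forall i, i < size bs -> proj (gnth bs i).2 r (nth LEnd Ts i)) ->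
    proj (GTr p q j bs) r (LRecv p (zip (keys bs) Ts))
| pj_tr_other r p q j bs Ts T :
    r <> p -> r <> q ->
    size Ts = size bs -> (forall i, i < size bs -> proj (gnth bs i).2 r (nth LEnd Ts i)) ->
    merge_all Ts T ->
    proj (GTr p q j bs) r T.

Definition well_formed (G : gtype) : Prop :=
  forall r, r \in roles G -> exists T, proj G r T.

Inductive glabel : Type :=
| LSnd : role -> role -> lab -> glabel
| LRcv : role -> role -> lab -> glabel
| LRSnd : role -> role -> role -> lab -> glabel       (* s:(pq!j), args s p q j *)
| LRRcv : role -> role -> role -> lab -> glabel.      (* s:(pq?j), args s p q j *)

Definition subj (l : glabel) : role :=
  match l with
  | LSnd p _ _ => p
  | LRcv _ q _ => q
  | LRSnd _ p _ _ => p
  | LRRcv _ _ q _ => q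
  end.

Definition canonical_label (l : glabel) : bool :=
  match l with LSnd _ _ _ | LRcv _ _ _ => true | _ => false end.

Inductive step : gtype -> glabel -> gtype -> Prop :=
| Gr1 p q bs j : j \in keys bs ->
    step (GMsg p q bs) (LSnd p q j) (GTr p q j bs)
| Gr2 p q j bs Gj : lookup j bs = Some Gj ->
    step (GTr p q j bs) (LRcv p q j) Gj
| Gr3 t G l G' : step (subst t (GRec t G) G) l G' ->
    step (GRec t G) l G'
| Gr4 p q bs bs' l :
    keys bs' = keys bs ->
    (forall i, i < size bs -> step (gnth bs i).2 l (gnth bs' i).2) ->
    subj l \notin [:: p; q] ->
    step (GMsg p q bs) l (GMsg p q bs')
| Gr5 p q j bs bs' l :
    j \in keys bs -> keys bs' = keys bs ->
    (forall i, i < size bs -> (gnth bs i).1 = j -> step (gnth bs i).2 l (gnth bs' i).2) ->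
    (forall i, i < size bs -> (gnth bs i).1 <> j -> (gnth bs' i).2 = (gnth bs i).2) ->
    subj l != q ->
    step (GTr p q j bs) l (GTr p q j bs')
| Gr6 p q s bs j : j \in keys bs ->
    step (GRMsg p q s bs) (LRSnd s p q j) (GRTr p q s j bs)
| Gr7 p q s j bs Gj : lookup j bs = Some Gj ->
    step (GRTr p q s j bs) (LRRcv s p q j) Gj
| Gr8 p q s bs bs' l :
    keys bs' = keys bs ->
    (forall i, i < size bs -> step (gnth bs i).2 l (gnth bs' i).2) ->
    subj l \notin [:: p; q] ->
    step (GRMsg p q s bs) l (GRMsg p q s bs')
| Gr9 p q s j bs bs' l :
    j \in keys bs -> keys bs' = keys bs ->
    (forall i, i < size bs -> (gnth bs i).1 = j -> step (gnth bs i).2 l (gnth bs' i).2) ->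
    (forall i, i < size bs -> (gnth bs i).1 <> j -> (gnth bs' i).2 = (gnth bs i).2) ->
    subj l != q ->
    step (GRTr p q s j bs) l (GRTr p q s j bs').

Fixpoint enc (s : role) (G : gtype) : gtype :=
  match G with
  | GEnd => GEnd
  | GVar t => GVar t
  | GRec t G1 => GRec t (enc s G1)
  | GMsg p q bs =>
      let bs' := map (fun b => (b.1, enc s b.2)) bs in
      if (s == p) || (s == q) then GMsg p q bs' else GRMsg p q s bs'
  | GTr p q j bs =>
      let bs' := map (fun b => (b.1, enc s b.2)) bs in
      if (s == p) || (s == q) then GTr p q j bs' else GRTr p q s j bs'
  (* enc_s is only specified on canonical types; routed constructs are
     left in place (continuations encoded) *)
  | GRMsg p q s' bs => GRMsg p q s' (map (fun b => (b.1, enc s b.2)) bs)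
  | GRTr p q s' j bs => GRTr p q s' j (map (fun b => (b.1, enc s b.2)) bs)
  end.

Definition enc_label (s : role) (l : glabel) : glabel :=
  match l with
  | LSnd p q j => if (s == p) || (s == q) then l else LRSnd s p q j
  | LRcv p q j => if (s == p) || (s == q) then l else LRRcv s p q j
  | _ => l
  end.

(* Main.v *)
Require Import Defs.
From mathcomp Require Import all_boot.
From Stdlib Require List.

Section GInd.
Variable P : gtype -> Prop.
Hypothesis HEnd : P GEnd.
Hypothesis HVar : forall t, P (GVar t).
Hypothesis HRec : forall t G, P G -> P (GRec t G).
Hypothesis HMsg : forall p q bs, (forall b, List.In b bs -> P b.2) -> P (GMsg p q bs).
Hypothesis HRMsg : forall p q r bs, (forall b, List.In b bs -> P b.2) -> P (GRMsg p q r bs).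
Hypothesis HTr : forall p q j bs, (forall b, List.In b bs -> P b.2) -> P (GTr p q j bs).
Hypothesis HRTr : forall p q r j bs, (forall b, List.In b bs -> P b.2) -> P (GRTr p q r j bs).

Fixpoint gind (G : gtype) : P G :=
  let fix br (bs : seq (lab * gtype)) : forall b, List.In b bs -> P b.2 :=
    match bs return forall b, List.In b bs -> P b.2 with
    | [::] => fun b H => False_ind _ H
    | b0 :: bs' => fun b H =>
        match H with
        | or_introl e => eq_ind b0 (fun b => P b.2) (gind b0.2) b e
        | or_intror H' => br bs' b H'
        end
    end in
  match G with
  | GEnd => HEnd
  | GVar t => HVar t
  | GRec t G1 => HRec t G1 (gind G1)
  | GMsg p q bs => HMsg p q bs (br bs)
  | GRMsg p q r bs => HRMsg p q r bs (br bs)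
  | GTr p q j bs => HTr p q j bs (br bs)
  | GRTr p q r j bs => HRTr p q r j bs (br bs)
  end.
End GInd.

Lemma map_ext_In (A B : Type) (f g : A -> B) (s : seq A) :
  (forall x, List.In x s -> f x = g x) -> map f s = map g s.
Proof.
elim: s => //= x s IH H; rewrite H; last by left.
by rewrite IH // => y Hy; apply: H; right.
Qed.

Lemma all_In (A : Type) (P : pred A) (s : seq A) :
  all P s <-> (forall x, List.In x s -> P x).
Proof.
elim: s => //= x s IH; split.
- by case/andP => Hx /IH Hs y [<-|Hy] //; apply: Hs.
- by move=> H; rewrite H /=; [apply/IH => y Hy; apply: H; right | left].
Qed.

Notation encb s := (fun b : lab * gtype => (b.1, enc s b.2)).
Notation substb t U := (fun b : lab * gtype => (b.1, subst t U b.2)).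

Lemma enc_subst s t U G : enc s (subst t U G) = subst t (enc s U) (enc s G).
Proof.
elim/gind: G => //=.
- by move=> t'; case: eqP.
- by move=> t' G IH; case: eqP => //= _; rewrite IH.
- move=> p q bs IH; rewrite -!map_comp.
  have E : map (encb s \o substb t U) bs = map (substb t (enc s U) \o encb s) bs.
    by apply: map_ext_In => b Hb /=; rewrite IH.
  by case: ifP => _ /=; rewrite -!map_comp E.
- move=> p q r bs IH; rewrite -!map_comp; congr GRMsg.
  by apply: map_ext_In => b Hb /=; rewrite IH.
- move=> p q j bs IH; rewrite -!map_comp.
  have E : map (encb s \o substb t U) bs = map (substb t (enc s U) \o encb s) bs.
    by apply: map_ext_In => b Hb /=; rewrite IH.
  by case: ifP => _ /=; rewrite -!map_comp E.
- move=> p q r j bs IH; rewrite -!map_comp; congr GRTr.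
  by apply: map_ext_In => b Hb /=; rewrite IH.
Qed.

Lemma canonical_subst t U G : canonical U -> canonical G -> canonical (subst t U G).
Proof.
move=> HU; elim/gind: G => //=.
- by move=> t'; case: eqP.
- by move=> t' G IH; case: eqP.
- move=> p q bs IH /all_In H; rewrite all_map; apply/all_In => b Hb /=.
  by apply: IH => //; apply: H.
- move=> p q j bs IH /all_In H; rewrite all_map; apply/all_In => b Hb /=.
  by apply: IH => //; apply: H.
Qed.

Lemma map_enc_inj s (bs1 bs2 : seq (lab * gtype)) :
  (forall b, List.In b bs1 -> forall G2, canonical b.2 -> canonical G2 ->
     enc s b.2 = enc s G2 -> b.2 = G2) ->
  all (fun b => canonical b.2) bs1 -> all (fun b => canonical b.2) bs2 ->
  map (encb s) bs1 = map (encb s) bs2 -> bs1 = bs2.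
Proof.
elim: bs1 bs2 => [|[k g] bs1 IH] [|[k' g'] bs2] //= H /andP[c1 a1] /andP[c2 a2] [-> E1 E2].
rewrite (H (k, g) (or_introl erefl) g' c1 c2 E1 : g = g') (IH bs2) //.
by move=> b Hb; apply: H; right.
Qed.

Lemma enc_inj s G1 G2 : canonical G1 -> canonical G2 -> enc s G1 = enc s G2 -> G1 = G2.
Proof.
elim/gind: G1 G2 => [|t|t G IH|p q bs IH|p q r bs IH|p q j bs IH|p q r j bs IH];
  case=> [|t'|t' G'|p' q' bs'|p' q' r' bs'|p' q' j' bs'|p' q' r' j' bs'] //= c1 c2;
  try (by case: ifP); try (by case: ifP => _; case: ifP).
- by case=> -> E; rewrite (IH G').
- case: ifP => _; case: ifP => _ H; try discriminate H; injection H => *; subst;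
  by rewrite (@map_enc_inj s bs bs' IH c1 c2).
- case: ifP => _; case: ifP => _ H; try discriminate H; injection H => *; subst;
  by rewrite (@map_enc_inj s bs bs' IH c1 c2).
Qed.

Definition allc (bs : seq (lab * gtype)) := all (fun b => canonical b.2) bs.

Lemma inv_Msg s G p q bs : canonical G -> enc s G = GMsg p q bs ->
  exists bs0, [/\ G = GMsg p q bs0, (s == p) || (s == q), allc bs0 & bs = map (encb s) bs0].
Proof.
case: G => //= [p' q' bs'|p' q' j bs'] c; case: ifP => // C [*]; subst.
by exists bs'.
Qed.

Lemma inv_RMsg s G p q r bs : canonical G -> enc s G = GRMsg p q r bs ->
  exists bs0, [/\ G = GMsg p q bs0, r = s, ~~ ((s == p) || (s == q)), allc bs0 & bs = map (encb s) bs0].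
Proof.
case: G => //= [p' q' bs'|p' q' j bs'] c; case: ifP => // C [*]; subst.
by exists bs'; rewrite C.
Qed.

Lemma inv_Tr s G p q j bs : canonical G -> enc s G = GTr p q j bs ->
  exists bs0, [/\ G = GTr p q j bs0, (s == p) || (s == q), allc bs0 & bs = map (encb s) bs0].
Proof.
case: G => //= [p' q' bs'|p' q' j' bs'] c; case: ifP => // C [*]; subst.
by exists bs'.
Qed.

Lemma inv_RTr s G p q r j bs : canonical G -> enc s G = GRTr p q r j bs ->
  exists bs0, [/\ G = GTr p q j bs0, r = s, ~~ ((s == p) || (s == q)), allc bs0 & bs = map (encb s) bs0].
Proof.
case: G => //= [p' q' bs'|p' q' j' bs'] c; case: ifP => // C [*]; subst.
by exists bs'; rewrite C.
Qed.

Lemma inv_Rec s G t E : canonical G -> enc s G = GRec t E ->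
  exists G0, [/\ G = GRec t G0, canonical G0 & E = enc s G0].
Proof.
case: G => //= [t' G0|p q bs|p q j bs] c; try (by case: ifP).
by case=> <- <-; exists G0.
Qed.

Lemma gnth_map s bs i : gnth (map (encb s) bs) i = ((gnth bs i).1, enc s (gnth bs i).2).
Proof. by rewrite /gnth; elim: bs i => [|b bs IH] [|i] //=. Qed.

Lemma keys_map s bs : keys (map (encb s) bs) = keys bs.
Proof. by rewrite /keys -map_comp. Qed.

Lemma lookup_map s j bs : lookup j (map (encb s) bs) = omap (enc s) (lookup j bs).
Proof. by elim: bs => [|[k g] bs IH] //=; case: eqP. Qed.

Lemma lookup_can j bs G : allc bs -> lookup j bs = Some G -> canonical G.
Proof.
elim: bs => [|[k g] bs IH] //= /andP[c a]; case: eqP => _; [by case=> <- | exact: IH].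
Qed.

Lemma allc_gnth bs i : allc bs -> i < size bs -> canonical (gnth bs i).2.
Proof.
rewrite /gnth; elim: bs i => [|b bs IH] [|i] //= /andP[c a] Hi //; exact: (IH _ a Hi).
Qed.

Lemma subj_enc s l : subj (enc_label s l) = subj l.
Proof. by case: l => //= *; case: ifP. Qed.

Lemma linv_Snd s l p q j : canonical_label l -> enc_label s l = LSnd p q j -> l = LSnd p q j.
Proof. by case: l => //= p' q' j' _; case: ifP. Qed.

Lemma linv_Rcv s l p q j : canonical_label l -> enc_label s l = LRcv p q j -> l = LRcv p q j.
Proof. by case: l => //= p' q' j' _; case: ifP. Qed.

Lemma linv_RSnd s l r p q j : canonical_label l -> enc_label s l = LRSnd r p q j -> l = LSnd p q j.
Proof. by case: l => //= p' q' j' _; case: ifP => // _ [_ -> -> ->]. Qed.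

Lemma linv_RRcv s l r p q j : canonical_label l -> enc_label s l = LRRcv r p q j -> l = LRcv p q j.
Proof. by case: l => //= p' q' j' _; case: ifP => // _ [_ -> -> ->]. Qed.

Lemma forward s G l G' : step G l G' -> step (enc s G) (enc_label s l) (enc s G').
Proof.
elim=> {G l G'} /=.
- move=> p q bs j Hj; case: ifP => C; [apply: Gr1 | apply: Gr6]; by rewrite keys_map.
- move=> p q j bs Gj H; case: ifP => C; [apply: Gr2 | apply: Gr7]; by rewrite lookup_map H.
- move=> t G l G' _ IH; apply: Gr3; by rewrite -[GRec t (enc s G)]/(enc s (GRec t G)) -enc_subst.
- move=> p q bs bs' l Hk _ IH Hs; case: ifP => C;
  [apply: Gr4 | apply: Gr8]; rewrite ?keys_map ?subj_enc //;
  move=> i; rewrite size_map !gnth_map /=; exact: IH.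
- move=> p q j bs bs' l Hj Hk _ IH Ho Hs; case: ifP => C;
  [apply: Gr5 | apply: Gr9]; rewrite ?keys_map ?subj_enc //;
  move=> i; rewrite size_map !gnth_map /= => Hi E;
  [exact: IH | by rewrite Ho | exact: IH | by rewrite Ho].
- move=> p q r bs j Hj; apply: Gr6; by rewrite keys_map.
- move=> p q r j bs Gj H; apply: Gr7; by rewrite lookup_map H.
- move=> p q r bs bs' l Hk _ IH Hs; apply: Gr8; rewrite ?keys_map ?subj_enc //;
  move=> i; rewrite size_map !gnth_map /=; exact: IH.
- move=> p q r j bs bs' l Hj Hk _ IH Ho Hs; apply: Gr9; rewrite ?keys_map ?subj_enc //;
  move=> i; rewrite size_map !gnth_map /= => Hi E; [exact: IH | by rewrite Ho].
Qed.

Arguments inv_Msg s {G p q bs}.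
Arguments inv_RMsg s {G p q r bs}.
Arguments inv_Tr s {G p q j bs}.
Arguments inv_RTr s {G p q r j bs}.
Arguments inv_Rec s {G t E}.
Arguments linv_Snd s {l p q j}.
Arguments linv_Rcv s {l p q j}.
Arguments linv_RSnd s {l r p q j}.
Arguments linv_RRcv s {l r p q j}.

Lemma backward s l : canonical_label l -> forall E L X, step E L X ->
  forall G G', canonical G -> canonical G' -> E = enc s G -> X = enc s G' ->
  L = enc_label s l -> step G l G'.
Proof.
move=> hl E L X; elim=> {E L X}.
- move=> p q bs j Hj G G' cG cG' /esym/(inv_Msg s cG) [bs0 [-> C a0 Eb]]
    /esym/(inv_Tr s cG') [bs1 [-> _ a1 E]] /esym/(linv_Snd s hl) ->; subst.
  have -> : bs1 = bs0.
    suff: GMsg p q bs1 = GMsg p q bs0 by case.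
    by apply: (@enc_inj s (GMsg p q bs1) (GMsg p q bs0)) => //=; rewrite C E.
  by apply: Gr1; rewrite keys_map in Hj.
- move=> p q j bs Gj H G G' cG cG' /esym/(inv_Tr s cG) [bs0 [-> C a0 Eb]] EX
    /esym/(linv_Rcv s hl) ->; subst.
  rewrite lookup_map in H.
  case Hl: (lookup j bs0) H => [G0|] //= [E0].
  have cG0 := @lookup_can j bs0 G0 a0 Hl.
  have -> : G' = G0 by apply: (@enc_inj s) => //; rewrite E0.
  exact: Gr2.
- move=> t E l' X _ IH G G' cG cG' /esym/(inv_Rec s cG) [G0 [-> c0 EE]] EX EL; subst.
  apply: Gr3; apply: IH => //.
  + by apply: canonical_subst.
  + by rewrite enc_subst.
- move=> p q bs bs' l' Hk _ IH Hs G G' cG cG' /esym/(inv_Msg s cG) [bs0 [-> C a0 Eb]]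
    /esym/(inv_Msg s cG') [bs1 [-> _ a1 Eb']] EL; subst.
  rewrite !keys_map in Hk; have Hsz : size bs1 = size bs0.
    by rewrite -(size_map fst bs1) -(size_map fst bs0); rewrite /keys in Hk; rewrite Hk.
  apply: Gr4 => //.
  + move=> i Hi; apply: (IH i) => //; rewrite ?size_map ?gnth_map //.
    * exact: allc_gnth.
    * by apply: allc_gnth; rewrite // Hsz.
  + by rewrite subj_enc in Hs.
- move=> p q j bs bs' l' Hj Hk _ IH Ho Hs G G' cG cG' /esym/(inv_Tr s cG) [bs0 [-> C a0 Eb]]
    /esym/(inv_Tr s cG') [bs1 [-> _ a1 Eb']] EL; subst.
  rewrite !keys_map in Hk Hj; have Hsz : size bs1 = size bs0.
    by rewrite -(size_map fst bs1) -(size_map fst bs0); rewrite /keys in Hk; rewrite Hk.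
  apply: Gr5 => //.
  + move=> i Hi Ei; apply: (IH i) => //; rewrite ?size_map ?gnth_map //.
    * exact: allc_gnth.
    * by apply: allc_gnth; rewrite // Hsz.
  + move=> i Hi Ei; have := Ho i; rewrite size_map !gnth_map => /(_ Hi Ei) [] E.
    by apply: (@enc_inj s) => //; apply: allc_gnth; rewrite // Hsz.
  + by rewrite subj_enc in Hs.
- move=> p q r bs j Hj G G' cG cG' /esym/(inv_RMsg s cG) [bs0 [-> -> C a0 Eb]]
    /esym/(inv_RTr s cG') [bs1 [-> _ _ a1 E]] /esym/(linv_RSnd s hl) ->; subst.
  have -> : bs1 = bs0.
    suff: GMsg p q bs1 = GMsg p q bs0 by case.
    by apply: (@enc_inj s (GMsg p q bs1) (GMsg p q bs0)) => //=; rewrite (negbTE C) E.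
  by apply: Gr1; rewrite keys_map in Hj.
- move=> p q r j bs Gj H G G' cG cG' /esym/(inv_RTr s cG) [bs0 [-> -> C a0 Eb]] EX
    /esym/(linv_RRcv s hl) ->; subst.
  rewrite lookup_map in H.
  case Hl: (lookup j bs0) H => [G0|] //= [E0].
  have cG0 := @lookup_can j bs0 G0 a0 Hl.
  have -> : G' = G0 by apply: (@enc_inj s) => //; rewrite E0.
  exact: Gr2.
- move=> p q r bs bs' l' Hk _ IH Hs G G' cG cG' /esym/(inv_RMsg s cG) [bs0 [-> -> C a0 Eb]]
    /esym/(inv_RMsg s cG') [bs1 [-> _ _ a1 Eb']] EL; subst.
  rewrite !keys_map in Hk; have Hsz : size bs1 = size bs0.
    by rewrite -(size_map fst bs1) -(size_map fst bs0); rewrite /keys in Hk; rewrite Hk.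
  apply: Gr4 => //.
  + move=> i Hi; apply: (IH i) => //; rewrite ?size_map ?gnth_map //.
    * exact: allc_gnth.
    * by apply: allc_gnth; rewrite // Hsz.
  + by rewrite subj_enc in Hs.
- move=> p q r j bs bs' l' Hj Hk _ IH Ho Hs G G' cG cG' /esym/(inv_RTr s cG) [bs0 [-> -> C a0 Eb]]
    /esym/(inv_RTr s cG') [bs1 [-> _ _ a1 Eb']] EL; subst.
  rewrite !keys_map in Hk Hj; have Hsz : size bs1 = size bs0.
    by rewrite -(size_map fst bs1) -(size_map fst bs0); rewrite /keys in Hk; rewrite Hk.
  apply: Gr5 => //.
  + move=> i Hi Ei; apply: (IH i) => //; rewrite ?size_map ?gnth_map //.
    * exact: allc_gnth.
    * by apply: allc_gnth; rewrite // Hsz.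
  + move=> i Hi Ei; have := Ho i; rewrite size_map !gnth_map => /(_ Hi Ei) [] E.
    by apply: (@enc_inj s) => //; apply: allc_gnth; rewrite // Hsz.
  + by rewrite subj_enc in Hs.
Qed.

Theorem theorem4p12 (G G' : gtype) (l : glabel) (s : role) :
  global_type G -> global_type G' ->
  canonical G -> canonical G' ->
  well_formed G -> well_formed G' ->
  canonical_label l ->
  step G l G' <-> step (enc s G) (enc_label s l) (enc s G').
Proof.
move=> _ _ cG cG' _ _ hl; split; first exact: forward.
by move=> H; exact: (@backward s l hl _ _ _ H G G' cG cG' erefl erefl erefl).
Qed.
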